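(* Let $X$ be a finite set, $F(X)$ the free lattice over $X$, $R\subseteq F(X)\times F(X)$ a finite set, and $\rho$ the congruence of $F(X)$ generated by $R$. The following are equivalent: (1) $F(X)/\rho$ is bounded. (2) $\rho$ is finitely generated as a sublattice of $F(X)\times F(X)$. (3) For every $u$ that is an element of $X$ or a subterm of a lattice term (over $X$) occurring in a pair of $R$, the class $u/\rho$ has both a least and a greatest element in $F(X)$.
   Context: A finitely generated lattice $D$ is lower bounded if there exist a finite set $Y$ and an epimorphism $f\colon F(Y)\to D$ such that for each $d\in D$ the preimage $f^{-1}(d)$ has a least element; upper bounded if there is such an epimorphism with every preimage having a greatest element; bounded if it is both lower and upper bounded. Elements of $F(X)$ are represented by lattice terms over $X$; the elements of $R$ are given as pairs of terms. *)

(* Defs.v *)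
From mathcomp Require Import all_boot.
From Stdlib Require Import List.
Set Implicit Arguments. Unset Strict Implicit. Unset Printing Implicit Defensive.

Inductive term (X : Type) : Type :=
| Var of X
| Join of term X & term X
| Meet of term X & term X.
Arguments Var {X} _.
Arguments Join {X} _ _.
Arguments Meet {X} _ _.

(** Terms modulo [cg nil] form the
    free lattice F(X); [cg R] (which contains [cg nil]) is then, read on
    representatives, the congruence rho of F(X) generated by R, and terms
    modulo [cg R] form F(X)/rho. *)
Inductive cg (X : Type) (R : list (term X * term X)) : term X -> term X -> Prop :=
| cg_base a b : List.In (a, b) R -> cg R a b
| cg_refl a : cg R a a
| cg_sym a b : cg R a b -> cg R b a
| cg_trans a b c : cg R a b -> cg R b c -> cg R a c
| cg_join a a' b b' : cg R a a' -> cg R b b' -> cg R (Join a b) (Join a' b')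
| cg_meet a a' b b' : cg R a a' -> cg R b b' -> cg R (Meet a b) (Meet a' b')
| cg_join_comm a b : cg R (Join a b) (Join b a)
| cg_meet_comm a b : cg R (Meet a b) (Meet b a)
| cg_join_assoc a b c : cg R (Join a (Join b c)) (Join (Join a b) c)
| cg_meet_assoc a b c : cg R (Meet a (Meet b c)) (Meet (Meet a b) c)
| cg_join_idem a : cg R (Join a a) a
| cg_meet_idem a : cg R (Meet a a) a
| cg_absorb_jm a b : cg R (Join a (Meet a b)) a
| cg_absorb_mj a b : cg R (Meet a (Join a b)) a.

Definition feq (X : Type) : term X -> term X -> Prop := cg (@nil (term X * term X)).

Definition fle (X : Type) (s t : term X) : Prop := feq (Meet s t) s.

(** A lattice presented as a setoid: carrier T, equality E, join jn, meet mt.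
    A lattice homomorphism F(Y) -> (T,E,jn,mt), given on representatives. *)
Definition is_hom (Y T : Type) (E : T -> T -> Prop) (jn mt : T -> T -> T)
  (f : term Y -> T) : Prop :=
  (forall s t, feq s t -> E (f s) (f t)) /\
  (forall s t, E (f (Join s t)) (jn (f s) (f t))) /\
  (forall s t, E (f (Meet s t)) (mt (f s) (f t))).

Definition is_epi (Y T : Type) (E : T -> T -> Prop) (jn mt : T -> T -> T)
  (f : term Y -> T) : Prop :=
  is_hom E jn mt f /\ forall d : T, exists s : term Y, E (f s) d.

Definition lower_bounded (T : Type) (E : T -> T -> Prop) (jn mt : T -> T -> T) : Prop :=
  exists (Y : finType) (f : term Y -> T), is_epi E jn mt f /\
    forall d : T, exists s0 : term Y, E (f s0) d /\
      forall s : term Y, E (f s) d -> fle s0 s.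

Definition upper_bounded (T : Type) (E : T -> T -> Prop) (jn mt : T -> T -> T) : Prop :=
  exists (Y : finType) (f : term Y -> T), is_epi E jn mt f /\
    forall d : T, exists s0 : term Y, E (f s0) d /\
      forall s : term Y, E (f s) d -> fle s s0.

Definition bounded (T : Type) (E : T -> T -> Prop) (jn mt : T -> T -> T) : Prop :=
  lower_bounded E jn mt /\ upper_bounded E jn mt.

Definition quotient_bounded (X : Type) (R : list (term X * term X)) : Prop :=
  bounded (cg R) (@Join X) (@Meet X).

Inductive gen_sub (X : Type) (S : list (term X * term X)) : term X * term X -> Prop :=
| gs_base p : List.In p S -> gen_sub S p
| gs_join p q : gen_sub S p -> gen_sub S q -> gen_sub S (Join p.1 q.1, Join p.2 q.2)
| gs_meet p q : gen_sub S p -> gen_sub S q -> gen_sub S (Meet p.1 q.1, Meet p.2 q.2).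

Definition cong_fin_gen (X : Type) (R : list (term X * term X)) : Prop :=
  exists S : list (term X * term X),
    (forall p, List.In p S -> cg R p.1 p.2) /\
    (forall a b, cg R a b ->
       exists a' b', gen_sub S (a', b') /\ feq a a' /\ feq b b').

Inductive subterm (X : Type) (u : term X) : term X -> Prop :=
| st_refl : subterm u u
| st_joinl a b : subterm u a -> subterm u (Join a b)
| st_joinr a b : subterm u b -> subterm u (Join a b)
| st_meetl a b : subterm u a -> subterm u (Meet a b)
| st_meetr a b : subterm u b -> subterm u (Meet a b).

Definition class_has_least (X : Type) (R : list (term X * term X)) (u : term X) : Prop :=
  exists m, cg R m u /\ forall v, cg R v u -> fle m v.
Definition class_has_greatest (X : Type) (R : list (term X * term X)) (u : term X) : Prop :=
  exists m, cg R m u /\ forall v, cg R v u -> fle v m.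

(* Main.v *)
Require Import Defs.
From mathcomp Require Import all_boot.
From Stdlib Require Import List Classical ClassicalEpsilon.
Set Bullet Behavior "Strict Subproofs".

Section Lat.
Variable X : Type.
Variable R : list (term X * term X).

Definition le (a b : term X) := cg R (Meet a b) a.

Lemma cg_tr a b c : cg R a b -> cg R b c -> cg R a c.
Proof. apply cg_trans. Qed.
Hint Resolve cg_refl cg_sym : core.

Lemma le_refl a : le a a.
Proof. apply cg_meet_idem. Qed.

Lemma le_trans a b c : le a b -> le b c -> le a c.
Proof.
  unfold le; intros H1 H2.
  eapply cg_tr. apply cg_meet. apply cg_sym, H1. apply cg_refl.
  eapply cg_tr. apply cg_sym, cg_meet_assoc.
  eapply cg_tr. apply cg_meet. apply cg_refl. apply H2. exact H1.
Qed.

Lemma le_meet_l a b : le (Meet a b) a.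
Proof.
  unfold le. eapply cg_tr. apply cg_meet_comm.
  eapply cg_tr. apply cg_meet_assoc.
  apply cg_meet. apply cg_meet_idem. apply cg_refl.
Qed.

Lemma le_meet_r a b : le (Meet a b) b.
Proof.
  unfold le. eapply cg_tr. apply cg_sym, cg_meet_assoc.
  apply cg_meet. apply cg_refl. apply cg_meet_idem.
Qed.

Lemma le_glb a b c : le c a -> le c b -> le c (Meet a b).
Proof.
  unfold le; intros H1 H2.
  eapply cg_tr. apply cg_meet_assoc.
  eapply cg_tr. apply cg_meet. apply H1. apply cg_refl. exact H2.
Qed.

Lemma le_join_l a b : le a (Join a b).
Proof. apply cg_absorb_mj. Qed.

Lemma le_join_r a b : le b (Join a b).
Proof.
  unfold le. eapply cg_tr. apply cg_meet. apply cg_refl. apply cg_join_comm.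
  apply cg_absorb_mj.
Qed.

Lemma le_joinE a c : le a c -> cg R (Join a c) c.
Proof.
  unfold le; intro H.
  eapply cg_tr. apply cg_join. apply cg_sym, H. apply cg_refl.
  eapply cg_tr. apply cg_join_comm.
  eapply cg_tr. apply cg_join. apply cg_refl. apply cg_meet_comm.
  apply cg_absorb_jm.
Qed.

Lemma joinE_le a c : cg R (Join a c) c -> le a c.
Proof.
  unfold le; intro H.
  eapply cg_tr. apply cg_meet. apply cg_refl. apply cg_sym, H.
  apply cg_absorb_mj.
Qed.

Lemma le_lub a b c : le a c -> le b c -> le (Join a b) c.
Proof.
  intros H1 H2. apply joinE_le.
  eapply cg_tr. apply cg_sym, cg_join_assoc.
  eapply cg_tr. apply cg_join. apply cg_refl. apply le_joinE, H2.
  apply le_joinE, H1.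
Qed.

Lemma le_cg a b : cg R a b -> le a b.
Proof.
  unfold le; intro H. eapply cg_tr. apply cg_meet. apply cg_refl. apply cg_sym, H.
  apply cg_meet_idem.
Qed.

Lemma le_antisym a b : le a b -> le b a -> cg R a b.
Proof.
  unfold le; intros H1 H2.
  eapply cg_tr. apply cg_sym, H1. eapply cg_tr. apply cg_meet_comm. exact H2.
Qed.

Lemma le_join_mono a a' b b' : le a a' -> le b b' -> le (Join a b) (Join a' b').
Proof.
  intros. apply le_lub. eapply le_trans. eassumption. apply le_join_l.
  eapply le_trans. eassumption. apply le_join_r.
Qed.

Lemma le_meet_mono a a' b b' : le a a' -> le b b' -> le (Meet a b) (Meet a' b').
Proof.
  intros. apply le_glb. eapply le_trans. apply le_meet_l. assumption.
  eapply le_trans. apply le_meet_r. assumption.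
Qed.

Lemma le_fold_meet_c (A : Type) (g : A -> term X) c l :
  le (fold_right (fun n acc => Meet (g n) acc) c l) c.
Proof.
  induction l; simpl. apply le_refl. eapply le_trans. apply le_meet_r. auto.
Qed.

Lemma le_fold_meet_g (A : Type) (g : A -> term X) c l n :
  In n l -> le (fold_right (fun n acc => Meet (g n) acc) c l) (g n).
Proof.
  induction l; simpl. tauto. intros [->|H]. apply le_meet_l.
  eapply le_trans. apply le_meet_r. auto.
Qed.

Lemma le_fold_meet_glb (A : Type) (g : A -> term X) c l s :
  le s c -> (forall n, In n l -> le s (g n)) ->
  le s (fold_right (fun n acc => Meet (g n) acc) c l).
Proof.
  induction l; simpl; intros. auto. apply le_glb; auto.
Qed.

Lemma le_fold_join_c (A : Type) (g : A -> term X) c l :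
  le c (fold_right (fun n acc => Join (g n) acc) c l).
Proof.
  induction l; simpl. apply le_refl. eapply le_trans. eauto. apply le_join_r.
Qed.

Lemma le_fold_join_g (A : Type) (g : A -> term X) c l n :
  In n l -> le (g n) (fold_right (fun n acc => Join (g n) acc) c l).
Proof.
  induction l; simpl. tauto. intros [->|H]. apply le_join_l.
  eapply le_trans. eauto. apply le_join_r.
Qed.

Lemma le_fold_join_lub (A : Type) (g : A -> term X) c l s :
  le c s -> (forall n, In n l -> le (g n) s) ->
  le (fold_right (fun n acc => Join (g n) acc) c l) s.
Proof.
  induction l; simpl; intros. auto. apply le_lub; auto.
Qed.

Variable Ul : list (term X).

Inductive D : term X -> term X -> Prop :=
| D_var x : D (Var x) (Var x)
| D_jl a1 a2 b : D a1 b -> D a2 b -> D (Join a1 a2) b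
| D_jr1 a b1 b2 : D a b1 -> D a (Join b1 b2)
| D_jr2 a b1 b2 : D a b2 -> D a (Join b1 b2)
| D_ml1 a1 a2 b : D a1 b -> D (Meet a1 a2) b
| D_ml2 a1 a2 b : D a2 b -> D (Meet a1 a2) b
| D_mr a b1 b2 : D a b1 -> D a b2 -> D a (Meet b1 b2)
| D_cut a u b : In u Ul -> le a u -> le u b -> D a b.

Lemma D_sound a b : D a b -> le a b.
Proof.
  induction 1.
  - apply le_refl.
  - apply le_lub; auto.
  - eapply le_trans. eauto. apply le_join_l.
  - eapply le_trans. eauto. apply le_join_r.
  - eapply le_trans. apply le_meet_l. auto.
  - eapply le_trans. apply le_meet_r. auto.
  - apply le_glb; auto.
  - eapply le_trans; eauto.
Qed.

Lemma D_refl a : D a a.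
Proof.
  induction a.
  - apply D_var.
  - apply D_jl. apply D_jr1; auto. apply D_jr2; auto.
  - apply D_mr. apply D_ml1; auto. apply D_ml2; auto.
Qed.

Lemma D_trans a b c : D a b -> D b c -> D a c.
Proof.
  intros H1; revert c.
  induction H1 as [x | a1 a2 b Ha1 IH1 Ha2 IH2 | a b1 b2 Hab IH | a b1 b2 Hab IH
    | a1 a2 b Ha IH | a1 a2 b Ha IH | a b1 b2 Hb1 IH1 Hb2 IH2 | a u b Hu Hau Hub];
    intros c H2.
  - exact H2.
  - apply D_jl; auto.
  - assert (Hs : le a (Join b1 b2)) by (eapply le_trans; [apply D_sound, Hab | apply le_join_l]).
    remember (Join b1 b2) as bb eqn:E. induction H2; try discriminate.
    + injection E as -> ->. auto.
    + apply D_jr1; auto.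
    + apply D_jr2; auto.
    + apply D_mr; auto.
    + subst. apply D_cut with u; [assumption | eapply le_trans; [exact Hs | assumption] | assumption].
  - assert (Hs : le a (Join b1 b2)) by (eapply le_trans; [apply D_sound, Hab | apply le_join_r]).
    remember (Join b1 b2) as bb eqn:E. induction H2; try discriminate.
    + injection E as -> ->. auto.
    + apply D_jr1; auto.
    + apply D_jr2; auto.
    + apply D_mr; auto.
    + subst. apply D_cut with u; [assumption | eapply le_trans; [exact Hs | assumption] | assumption].
  - apply D_ml1; auto.
  - apply D_ml2; auto.
  - assert (Hs : le a (Meet b1 b2)) by (apply D_sound, D_mr; assumption).
    remember (Meet b1 b2) as bb eqn:E. induction H2; try discriminate.
    + apply D_jr1; auto.
    + apply D_jr2; auto.
    + injection E as -> ->. auto.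
    + injection E as -> ->. auto.
    + apply D_mr; auto.
    + subst. apply D_cut with u; [assumption | eapply le_trans; [exact Hs | assumption] | assumption].
  - apply D_cut with u; auto. eapply le_trans. exact Hub. apply D_sound; auto.
Qed.

Lemma D_cg_both a b : (forall p q, In (p, q) R -> In p Ul) ->
  cg R a b -> D a b /\ D b a.
Proof.
  intros HU. induction 1.
  - split; apply D_cut with a; try (eapply HU; eassumption); try apply le_refl;
      apply le_cg; [apply cg_base; assumption | apply cg_sym, cg_base; assumption].
  - split; apply D_refl.
  - tauto.
  - split; eapply D_trans; intuition eauto.
  - destruct IHcg1, IHcg2. split; apply D_jl.
    all: first [apply D_jr1; assumption | apply D_jr2; assumption].
  - destruct IHcg1, IHcg2. split; apply D_mr.
    all: first [apply D_ml1; assumption | apply D_ml2; assumption].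
  - split; apply D_jl; first [apply D_jr1; apply D_refl | apply D_jr2; apply D_refl].
  - split; apply D_mr; first [apply D_ml1; apply D_refl | apply D_ml2; apply D_refl].
  - split.
    + apply D_jl. apply D_jr1, D_jr1, D_refl. apply D_jl. apply D_jr1, D_jr2, D_refl. apply D_jr2, D_refl.
    + apply D_jl. apply D_jl. apply D_jr1, D_refl. apply D_jr2, D_jr1, D_refl. apply D_jr2, D_jr2, D_refl.
  - split.
    + apply D_mr. apply D_mr. apply D_ml1, D_refl. apply D_ml2, D_ml1, D_refl. apply D_ml2, D_ml2, D_refl.
    + apply D_mr. apply D_ml1, D_ml1, D_refl. apply D_mr. apply D_ml1, D_ml2, D_refl. apply D_ml2, D_refl.
  - split. apply D_jl; apply D_refl. apply D_jr1, D_refl.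
  - split. apply D_ml1, D_refl. apply D_mr; apply D_refl.
  - split. apply D_jl. apply D_refl. apply D_ml1, D_refl. apply D_jr1, D_refl.
  - split. apply D_ml1, D_refl. apply D_mr. apply D_refl. apply D_jr1, D_refl.
Qed.

Lemma D_complete a b : (forall p q, In (p, q) R -> In p Ul) -> le a b -> D a b.
Proof.
  intros HU H. apply D_cg_both in H; auto. destruct H as [_ H].
  eapply D_trans. exact H. apply D_ml2, D_refl.
Qed.

End Lat.

Arguments le {X} R a b.
Arguments D {X} R Ul _ _.

Lemma fle_le X (a b : term X) : fle a b = le nil a b.
Proof. reflexivity. Qed.

Lemma fle_D X (a b : term X) : fle a b -> D nil nil a b.
Proof. intro H. apply D_complete; auto; intros p q []. Qed.

Lemma D_fle X (a b : term X) : D nil nil a b -> fle a b.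
Proof. apply D_sound. Qed.

Lemma W1 X (a b : X) : fle (Var a) (Var b) -> a = b.
Proof. intro H. apply fle_D in H. inversion H; subst; auto. contradiction. Qed.

Lemma W2 X (t1 t2 : term X) b : fle (Meet t1 t2) (Var b) -> fle t1 (Var b) \/ fle t2 (Var b).
Proof. intro H. apply fle_D in H. inversion H; subst.
  left; apply D_fle; auto. right; apply D_fle; auto. contradiction. Qed.

Lemma W3 X (s1 s2 : term X) b : fle (Var b) (Join s1 s2) -> fle (Var b) s1 \/ fle (Var b) s2.
Proof. intro H. apply fle_D in H. inversion H; subst.
  left; apply D_fle; auto. right; apply D_fle; auto. contradiction. Qed.

Lemma W4 X (t1 t2 s1 s2 : term X) : fle (Meet t1 t2) (Join s1 s2) ->
  fle t1 (Join s1 s2) \/ fle t2 (Join s1 s2) \/ fle (Meet t1 t2) s1 \/ fle (Meet t1 t2) s2.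
Proof. intro H. apply fle_D in H. inversion H; subst.
  - right; right; left; apply D_fle; auto.
  - right; right; right; apply D_fle; auto.
  - left; apply D_fle; auto.
  - right; left; apply D_fle; auto.
  - contradiction. Qed.

Fixpoint sub {A B : Type} (s : A -> term B) (t : term A) : term B :=
  match t with
  | Var x => s x
  | Join a b => Join (sub s a) (sub s b)
  | Meet a b => Meet (sub s a) (sub s b)
  end.

Lemma sub_feq A B (s : A -> term B) a b : feq a b -> feq (sub s a) (sub s b).
Proof.
  unfold feq. induction 1; simpl; try solve [constructor; auto].
  all: first [contradiction | eapply cg_trans; eauto | idtac].
Qed.

Lemma sub_fle A B (s : A -> term B) a b : fle a b -> fle (sub s a) (sub s b).
Proof. intro H. unfold fle. change (feq (sub s (Meet a b)) (sub s a)). apply sub_feq, H. Qed.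

Lemma cg_nil_R X (R : list (term X * term X)) a b : cg nil a b -> cg R a b.
Proof.
  induction 1; try solve [constructor; auto].
  all: first [contradiction | eapply cg_trans; eauto | idtac].
Qed.

Lemma fle_R X (R : list (term X * term X)) a b : fle a b -> le R a b.
Proof. apply cg_nil_R. Qed.

Definition decb (P : Prop) : bool := if excluded_middle_informative P then true else false.
Lemma decbT P : decb P = true <-> P.
Proof. unfold decb. destruct (excluded_middle_informative P); split; auto; discriminate. Qed.

Lemma In_of_mem (T : eqType) (x : T) (s : list T) : x \in s -> In x s.
Proof.
  elim: s => [|y s IH] H; first by rewrite seq.in_nil in H.
  move: H; rewrite seq.in_cons => /orP [/eqP ->|H]; [left|right]; auto.
Qed.

Lemma In_enum (T : finType) (x : T) : In x (enum T).
Proof. apply In_of_mem. by rewrite mem_enum. Qed.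

Section RL.
Variables (B : Type) (N : finType) (w : N -> term B).

Definition rr : term (B + N) -> term B :=
  sub (fun z => match z with inl b => Var b | inr n => w n end).

Definition Mf (t : term B) := List.filter (fun n => decb (fle t (w n))) (enum N).
Definition Mfd (t : term B) := List.filter (fun n => decb (fle (w n) t)) (enum N).

Lemma Mf_In t n : In n (Mf t) <-> fle t (w n).
Proof. unfold Mf. rewrite filter_In decbT. split; [tauto | split; auto; apply In_enum]. Qed.
Lemma Mfd_In t n : In n (Mfd t) <-> fle (w n) t.
Proof. unfold Mfd. rewrite filter_In decbT. split; [tauto | split; auto; apply In_enum]. Qed.

Fixpoint bt (t : term B) : term (B + N) :=
  fold_right (fun n acc => Meet (Var (inr n)) acc)
    (match t with Var b => Var (inl b) | Join t1 t2 => Join (bt t1) (bt t2)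
     | Meet t1 t2 => Meet (bt t1) (bt t2) end) (Mf t).

Fixpoint btd (t : term B) : term (B + N) :=
  fold_right (fun n acc => Join (Var (inr n)) acc)
    (match t with Var b => Var (inl b) | Join t1 t2 => Join (btd t1) (btd t2)
     | Meet t1 t2 => Meet (btd t1) (btd t2) end) (Mfd t).

Definition bcore t := match t with Var b => Var (inl b) | Join t1 t2 => Join (bt t1) (bt t2)
     | Meet t1 t2 => Meet (bt t1) (bt t2) end.
Definition bdcore t := match t with Var b => Var (inl b) | Join t1 t2 => Join (btd t1) (btd t2)
     | Meet t1 t2 => Meet (btd t1) (btd t2) end.

Lemma bt_eq t : bt t = fold_right (fun n acc => Meet (Var (inr n)) acc) (bcore t) (Mf t).
Proof. destruct t; reflexivity. Qed.
Lemma btd_eq t : btd t = fold_right (fun n acc => Join (Var (inr n)) acc) (bdcore t) (Mfd t).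
Proof. destruct t; reflexivity. Qed.

Lemma bt_core t : fle (bt t) (bcore t).
Proof. rewrite bt_eq. apply (le_fold_meet_c _ nil _ (fun n => Var (inr n))). Qed.
Lemma bt_n t n : fle t (w n) -> fle (bt t) (Var (inr n)).
Proof. intro H. rewrite bt_eq. apply (le_fold_meet_g _ nil _ (fun n => Var (inr n))). apply Mf_In, H. Qed.
Lemma btd_core t : fle (bdcore t) (btd t).
Proof. rewrite btd_eq. apply (le_fold_join_c _ nil _ (fun n => Var (inr n))). Qed.
Lemma btd_n t n : fle (w n) t -> fle (Var (inr n)) (btd t).
Proof. intro H. rewrite btd_eq. apply (le_fold_join_g _ nil _ (fun n => Var (inr n))). apply Mfd_In, H. Qed.

Lemma rr_fold c l : rr (fold_right (fun n acc => Meet (Var (inr n)) acc) c l) =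
  fold_right (fun n acc => Meet (w n) acc) (rr c) l.
Proof. induction l; simpl; auto. rewrite <- IHl. reflexivity. Qed.
Lemma rr_foldd c l : rr (fold_right (fun n acc => Join (Var (inr n)) acc) c l) =
  fold_right (fun n acc => Join (w n) acc) (rr c) l.
Proof. induction l; simpl; auto. rewrite <- IHl. reflexivity. Qed.

Lemma bt_up t : fle t (rr (bt t)).
Proof.
  induction t; rewrite bt_eq rr_fold; apply (le_fold_meet_glb _ nil _ w);
    try (intros n Hn; apply Mf_In; exact Hn); simpl.
  - apply le_refl.
  - apply le_join_mono; auto.
  - apply le_meet_mono; auto.
Qed.

Lemma btd_down t : fle (rr (btd t)) t.
Proof.
  induction t; rewrite btd_eq rr_foldd; apply (le_fold_join_lub _ nil _ w);
    try (intros n Hn; apply Mfd_In; exact Hn); simpl.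
  - apply le_refl.
  - apply le_join_mono; auto.
  - apply le_meet_mono; auto.
Qed.

Lemma bt_least t s : fle t (rr s) -> fle (bt t) s.
Proof.
  revert s. induction t as [b | t1 IH1 t2 IH2 | t1 IH1 t2 IH2]; intro s.
  - induction s as [[b'|n] | s1 IHs1 s2 IHs2 | s1 IHs1 s2 IHs2]; intro H.
    + apply W1 in H; subst. apply bt_core.
    + apply bt_n, H.
    + simpl in H. apply W3 in H as [H|H].
      * eapply le_trans. apply IHs1, H. apply le_join_l.
      * eapply le_trans. apply IHs2, H. apply le_join_r.
    + simpl in H. apply le_glb.
      * apply IHs1. eapply le_trans. exact H. apply le_meet_l.
      * apply IHs2. eapply le_trans. exact H. apply le_meet_r.
  - intro H. eapply le_trans. apply bt_core. simpl. apply le_lub.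
    + apply IH1. eapply le_trans. apply le_join_l. exact H.
    + apply IH2. eapply le_trans. apply le_join_r. exact H.
  - assert (Hc : forall s, (fle t1 (rr s) \/ fle t2 (rr s)) -> fle (bt (Meet t1 t2)) s).
    { intros s' [H|H]; eapply le_trans; try apply bt_core; simpl.
      - eapply le_trans. apply le_meet_l. apply IH1, H.
      - eapply le_trans. apply le_meet_r. apply IH2, H. }
    induction s as [[b'|n] | s1 IHs1 s2 IHs2 | s1 IHs1 s2 IHs2]; intro H.
    + apply Hc. simpl. apply W2 in H. exact H.
    + apply bt_n, H.
    + simpl in H. apply W4 in H as [H|[H|[H|H]]].
      * apply Hc; left; exact H.
      * apply Hc; right; exact H.
      * eapply le_trans. apply IHs1, H. apply le_join_l.
      * eapply le_trans. apply IHs2, H. apply le_join_r.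
    + simpl in H. apply le_glb.
      * apply IHs1. eapply le_trans. exact H. apply le_meet_l.
      * apply IHs2. eapply le_trans. exact H. apply le_meet_r.
Qed.

Lemma btd_greatest t s : fle (rr s) t -> fle s (btd t).
Proof.
  revert s. induction t as [b | t1 IH1 t2 IH2 | t1 IH1 t2 IH2]; intro s.
  - induction s as [[b'|n] | s1 IHs1 s2 IHs2 | s1 IHs1 s2 IHs2]; intro H.
    + apply W1 in H; subst. exact (btd_core (Var b)).
    + apply btd_n, H.
    + simpl in H. apply le_lub.
      * apply IHs1. eapply le_trans. apply le_join_l. exact H.
      * apply IHs2. eapply le_trans. apply le_join_r. exact H.
    + simpl in H. apply W2 in H as [H|H].
      * eapply le_trans. apply le_meet_l. apply IHs1, H.
      * eapply le_trans. apply le_meet_r. apply IHs2, H.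
  - assert (Hc : forall s, (fle (rr s) t1 \/ fle (rr s) t2) -> fle s (btd (Join t1 t2))).
    { intros s' [H|H]; (eapply le_trans; [|apply btd_core]); simpl.
      - eapply le_trans. apply IH1, H. apply le_join_l.
      - eapply le_trans. apply IH2, H. apply le_join_r. }
    induction s as [[b'|n] | s1 IHs1 s2 IHs2 | s1 IHs1 s2 IHs2]; intro H.
    + apply Hc. simpl. apply W3 in H. exact H.
    + apply btd_n, H.
    + simpl in H. apply le_lub.
      * apply IHs1. eapply le_trans. apply le_join_l. exact H.
      * apply IHs2. eapply le_trans. apply le_join_r. exact H.
    + simpl in H. apply W4 in H as [H|[H|[H|H]]].
      * eapply le_trans. apply le_meet_l. apply IHs1, H.
      * eapply le_trans. apply le_meet_r. apply IHs2, H.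
      * apply Hc; left; exact H.
      * apply Hc; right; exact H.
  - intro H. eapply le_trans; [|apply btd_core]. simpl. apply le_glb.
    + apply IH1. eapply le_trans. exact H. apply le_meet_l.
    + apply IH2. eapply le_trans. exact H. apply le_meet_r.
Qed.

End RL.

Arguments le {X} R a b.
Arguments rr {B N} w _.
Arguments bt {B N} w _.
Arguments btd {B N} w _.

Lemma hom_fle Y Z (R' : list (term Z * term Z)) (f : term Y -> term Z) a b :
  is_hom (cg R') (@Join Z) (@Meet Z) f -> fle a b -> le R' (f a) (f b).
Proof.
  intros [Hf [Hj Hm]] H. unfold le. eapply cg_trans. apply cg_sym, Hm. apply Hf, H.
Qed.

Arguments hom_fle {Y Z R' f a b}.
Section Transfer.
Variables (Y : Type) (X : finType) (Z : Type) (R' : list (term Z * term Z)).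
Variables (g : term Y -> term Z) (pi : term X -> term Z).
Hypothesis Hg : is_epi (cg R') (@Join Z) (@Meet Z) g.
Hypothesis Hpi : is_epi (cg R') (@Join Z) (@Meet Z) pi.

Definition wX (x : X) : term Y :=
  proj1_sig (constructive_indefinite_description _ (proj2 Hg (pi (Var x)))).
Lemma wX_spec x : cg R' (g (wX x)) (pi (Var x)).
Proof. unfold wX. destruct (constructive_indefinite_description _ _); simpl; auto. Qed.
Definition vY (y : Y) : term X :=
  proj1_sig (constructive_indefinite_description _ (proj2 Hpi (g (Var y)))).
Lemma vY_spec y : cg R' (pi (vY y)) (g (Var y)).
Proof. unfold vY. destruct (constructive_indefinite_description _ _); simpl; auto. Qed.

Definition r1 : term (Y + X) -> term Y := rr wX.
Definition r2 : term (Y + X) -> term X :=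
  sub (fun z => match z with inl y => vY y | inr x => Var x end).
Definition incl : term X -> term (Y + X) := sub (fun x => Var (inr x)).

Lemma K1 s : cg R' (pi (r2 s)) (g (r1 s)).
Proof.
  destruct Hg as [[Hgf [Hgj Hgm]] _]. destruct Hpi as [[Hpf [Hpj Hpm]] _].
  induction s as [[y|x] | s1 IH1 s2 IH2 | s1 IH1 s2 IH2]; simpl.
  - apply vY_spec.
  - apply cg_sym, wX_spec.
  - eapply cg_trans. apply Hpj. eapply cg_trans. apply cg_join; eauto. apply cg_sym, Hgj.
  - eapply cg_trans. apply Hpm. eapply cg_trans. apply cg_meet; eauto. apply cg_sym, Hgm.
Qed.

Lemma K2 s : r2 (incl s) = s.
Proof. unfold r2, incl. induction s; simpl; try rewrite IHs1 IHs2; reflexivity. Qed.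

Lemma transfer_lo :
  (forall d, exists s0, cg R' (g s0) d /\ forall s, cg R' (g s) d -> fle s0 s) ->
  forall d, exists m, cg R' (pi m) d /\ forall s, cg R' (pi s) d -> fle m s.
Proof.
  intros HL d. destruct (HL d) as [s0 [Hs0 Hmin]].
  destruct (proj2 Hpi d) as [u Hu].
  pose proof Hg as Hg'. destruct Hg' as [[Hgf [Hgj Hgm]] _].
  pose proof Hpi as Hpi'. destruct Hpi' as [[Hpf [Hpj Hpm]] _].
  exists (Meet (r2 (bt wX s0)) u). split.
  - eapply cg_trans. apply Hpm. eapply cg_trans. apply cg_meet. apply K1. apply Hu.
    assert (H1 : le R' (g s0) (g (r1 (bt wX s0)))) by (apply (hom_fle (proj1 Hg)), bt_up).
    unfold le in H1.
    eapply cg_trans. apply cg_meet_comm.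
    eapply cg_trans. apply cg_meet. apply cg_sym, Hs0. apply cg_refl.
    eapply cg_trans. apply H1. exact Hs0.
  - intros s Hs. eapply le_trans. apply le_meet_l.
    rewrite <- (K2 s). apply sub_fle. apply bt_least.
    apply Hmin. eapply cg_trans. apply cg_sym, K1. rewrite K2. exact Hs.
Qed.

Lemma transfer_hi :
  (forall d, exists s0, cg R' (g s0) d /\ forall s, cg R' (g s) d -> fle s s0) ->
  forall d, exists m, cg R' (pi m) d /\ forall s, cg R' (pi s) d -> fle s m.
Proof.
  intros HL d. destruct (HL d) as [s0 [Hs0 Hmax]].
  destruct (proj2 Hpi d) as [u Hu].
  pose proof Hg as Hg'. destruct Hg' as [[Hgf [Hgj Hgm]] _].
  pose proof Hpi as Hpi'. destruct Hpi' as [[Hpf [Hpj Hpm]] _].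
  exists (Join (r2 (btd wX s0)) u). split.
  - eapply cg_trans. apply Hpj. eapply cg_trans. apply cg_join. apply K1. apply Hu.
    assert (H1 : le R' (g (r1 (btd wX s0))) (g s0)) by (apply (hom_fle (proj1 Hg)), btd_down).
    apply le_joinE in H1.
    eapply cg_trans. apply cg_join. apply cg_refl. apply cg_sym, Hs0.
    eapply cg_trans. apply H1. exact Hs0.
  - intros s Hs. eapply le_trans; [|apply le_join_l].
    rewrite <- (K2 s). apply sub_fle. apply btd_greatest.
    apply Hmax. eapply cg_trans. apply cg_sym, K1. rewrite K2. exact Hs.
Qed.

End Transfer.

Arguments le {X} R a b.
Arguments D {X} R Ul _ _.
Arguments D_sound {X R Ul a b}.
Arguments D_refl {X R Ul} a.
Arguments D_complete {X R Ul a b}.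

Section Main.
Variables (X : finType) (R : list (term X * term X)).

Definition Q3 := forall u, class_has_least R u /\ class_has_greatest R u.

Lemma id_epi : is_epi (cg R) (@Join X) (@Meet X) (fun t => t).
Proof.
  split. split. intros s t H; apply cg_nil_R, H. split; intros; apply cg_refl.
  intro d; exists d; apply cg_refl.
Qed.

Lemma one_to_Q3 : quotient_bounded R -> Q3.
Proof.
  intros [[Y [f [He HL]]] [Y' [f' [He' HU]]]] u. split.
  - exact (@transfer_lo Y X X R f (fun t => t) He id_epi HL u).
  - exact (@transfer_hi Y' X X R f' (fun t => t) He' id_epi HU u).
Qed.

Lemma Q3_to_one : Q3 -> quotient_bounded R.
Proof.
  intro H. split; exists X, (fun t => t); split; try apply id_epi;
    intro d; destruct (H d) as [[m Hm] [M HM]]; eauto.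
Qed.

Lemma In_nth_seq T (s : list T) d i : i < size s -> In (seq.nth d s i) s.
Proof.
  elim: s i => [|x s IH] [|i] //= H; [left | right; apply IH]; auto.
Qed.

Lemma nth_of_In T (s : list T) p : In p s -> exists i, i < size s /\ seq.nth p s i = p.
Proof.
  elim: s => [|x s IH] //= [->|H]. exists 0. split; auto.
  destruct (IH H) as [i [Hi Hn]]. exists i.+1. split; auto.
Qed.

Lemma two_to_Q3 : cong_fin_gen R -> Q3.
Proof.
  intros [S [HS1 HS2]].
  set e := fun k : 'I_(size S) => tnth (in_tuple S) k.
  assert (In_e : forall k, In (e k) S).
  { intro k. unfold e. rewrite (tnth_nth (tnth (in_tuple S) k)). apply In_nth_seq, ltn_ord. }
  assert (e_of : forall p, In p S -> exists k, e k = p).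
  { intros p Hp. destruct (@nth_of_In _ S p Hp) as [i [Hi Hn]]. exists (Ordinal Hi).
    unfold e. rewrite (tnth_nth p). exact Hn. }
  set g1 := sub (fun k => (e k).1). set g2 := sub (fun k => (e k).2).
  assert (GS : forall p, gen_sub S p -> exists w, g1 w = p.1 /\ g2 w = p.2).
  { induction 1 as [p Hp | p q _ [w1 [H1 H2]] _ [w2 [H3 H4]] | p q _ [w1 [H1 H2]] _ [w2 [H3 H4]]].
    - destruct (e_of p Hp) as [k Hk]. exists (Var k). subst g1 g2; simpl; rewrite Hk; auto.
    - exists (Join w1 w2). subst g1 g2; simpl in *. rewrite H1 H2 H3 H4. auto.
    - exists (Meet w1 w2). subst g1 g2; simpl in *. rewrite H1 H2 H3 H4. auto. }
  assert (Hrho : forall w, cg R (g1 w) (g2 w)).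
  { induction w; subst g1 g2; simpl in *. apply HS1, In_e. apply cg_join; auto. apply cg_meet; auto. }
  assert (Hsub_epi : forall (s : 'I_(size S) -> term X), is_hom (cg nil) (@Join X) (@Meet X) (sub s)).
  { intro s. split. intros a b H; apply sub_feq, H. split; intros; apply cg_refl. }
  assert (E2 : is_epi (cg nil) (@Join X) (@Meet X) g2).
  { split. apply Hsub_epi. intro d. destruct (HS2 d d (cg_refl _ _)) as [a' [b' [Hg [_ Hb]]]].
    destruct (GS _ Hg) as [w [_ Hw]]. exists w. simpl in Hw. rewrite Hw. apply cg_sym, Hb. }
  assert (Eid : is_epi (cg nil) (@Join X) (@Meet X) (fun t => t)).
  { split. split. auto. split; intros; apply cg_refl. intro d; exists d; apply cg_refl. }
  intro t. split.
  - assert (HL : forall d : term X, exists s0 : term X, cg nil s0 d /\ forall s, cg nil s d -> fle s0 s).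
    { intro d. exists d. split. apply cg_refl. intros s Hs. apply le_cg, cg_sym, Hs. }
    destruct (@transfer_lo X _ X nil (fun t => t) g2 Eid E2 HL t) as [m0 [Hm0 Hmin]].
    exists (g1 m0). split.
    + eapply cg_trans. apply Hrho. apply cg_nil_R, Hm0.
    + intros v Hv. destruct (HS2 v t Hv) as [a' [b' [Hg [Ha Hb]]]].
      destruct (GS _ Hg) as [w [Hw1 Hw2]]. simpl in Hw1, Hw2.
      eapply le_trans with (b := g1 w).
      * apply sub_fle, Hmin. change (cg nil (g2 w) t). rewrite Hw2. apply cg_sym, Hb.
      * rewrite Hw1. apply le_cg, cg_sym, Ha.
  - assert (HL : forall d : term X, exists s0 : term X, cg nil s0 d /\ forall s, cg nil s d -> fle s s0).
    { intro d. exists d. split. apply cg_refl. intros s Hs. apply le_cg, Hs. }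
    destruct (@transfer_hi X _ X nil (fun t => t) g2 Eid E2 HL t) as [m0 [Hm0 Hmax]].
    exists (g1 m0). split.
    + eapply cg_trans. apply Hrho. apply cg_nil_R, Hm0.
    + intros v Hv. destruct (HS2 v t Hv) as [a' [b' [Hg [Ha Hb]]]].
      destruct (GS _ Hg) as [w [Hw1 Hw2]]. simpl in Hw1, Hw2.
      eapply le_trans with (b := g1 w).
      * rewrite Hw1. apply le_cg, Ha.
      * apply sub_fle, Hmax. change (cg nil (g2 w) t). rewrite Hw2. apply cg_sym, Hb.
Qed.

End Main.

Arguments le {X} R a b.
Arguments D {X} R Ul _ _.
Arguments D_sound {X R Ul a b}.
Arguments D_refl {X R Ul} a.
Arguments D_complete {X R Ul a b}.

Section Three.
Variables (X : finType) (R : list (term X * term X)).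

Definition Ul : list (term X) := List.map (fun x => Var x) (enum X) ++ List.map fst R.

Hypothesis H3 : forall u : term X,
       ((exists x : X, u = Var x) \/
        (exists p, List.In p R /\ (subterm u p.1 \/ subterm u p.2))) ->
       class_has_least R u /\ class_has_greatest R u.

Lemma HUl u : In u Ul -> class_has_least R u /\ class_has_greatest R u.
Proof.
  intro H. apply H3. unfold Ul in H. apply in_app_or in H as [H|H].
  - apply in_map_iff in H as [x [<- _]]. left; eauto.
  - apply in_map_iff in H as [p [<- Hp]]. right. exists p. split; auto. left; constructor.
Qed.

Lemma HU : forall p q, In (p, q) R -> In p Ul.
Proof. intros p q H. unfold Ul. apply in_or_app. right. change p with (fst (p, q)). apply in_map, H. Qed.

Definition lo (u : term X) : term X :=
  match excluded_middle_informative (class_has_least R u) with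
  | left H => proj1_sig (constructive_indefinite_description _ H) | right _ => u end.
Definition hi (u : term X) : term X :=
  match excluded_middle_informative (class_has_greatest R u) with
  | left H => proj1_sig (constructive_indefinite_description _ H) | right _ => u end.

Lemma lo_spec u : class_has_least R u -> cg R (lo u) u /\ forall v, cg R v u -> fle (lo u) v.
Proof.
  intro H. unfold lo. destruct (excluded_middle_informative _); [|contradiction].
  destruct (constructive_indefinite_description _ _); simpl; auto.
Qed.
Lemma hi_spec u : class_has_greatest R u -> cg R (hi u) u /\ forall v, cg R v u -> fle v (hi u).
Proof.
  intro H. unfold hi. destruct (excluded_middle_informative _); [|contradiction].
  destruct (constructive_indefinite_description _ _); simpl; auto.
Qed.

Lemma UPLO u s : In u Ul -> le R u s -> fle (lo u) s.
Proof.
  intros Hu H. destruct (lo_spec u (proj1 (HUl u Hu))) as [_ Hm].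
  eapply le_trans. apply Hm, H. apply le_meet_r.
Qed.
Lemma UPHI u s : In u Ul -> le R s u -> fle s (hi u).
Proof.
  intros Hu H. destruct (hi_spec u (proj2 (HUl u Hu))) as [_ Hm].
  eapply le_trans; [| apply Hm, le_joinE, H]. apply le_join_l.
Qed.

Definition Lm t := List.filter (fun u => decb (le R t u)) Ul.
Definition Lj t := List.filter (fun u => decb (le R u t)) Ul.

Lemma Lm_In t u : In u (Lm t) <-> In u Ul /\ le R t u.
Proof. unfold Lm. rewrite filter_In decbT. tauto. Qed.
Lemma Lj_In t u : In u (Lj t) <-> In u Ul /\ le R u t.
Proof. unfold Lj. rewrite filter_In decbT. tauto. Qed.

Fixpoint Pg (g : term X -> term X) (t : term X) : term X :=
  fold_right (fun u acc => Join (g u) acc)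
   (fold_right (fun u acc => Meet (g u) acc)
     (match t with Var x => Var x | Join t1 t2 => Join (Pg g t1) (Pg g t2)
      | Meet t1 t2 => Meet (Pg g t1) (Pg g t2) end) (Lm t)) (Lj t).

Definition Pcore g t := match t with Var x => Var x | Join t1 t2 => Join (Pg g t1) (Pg g t2)
      | Meet t1 t2 => Meet (Pg g t1) (Pg g t2) end.

Lemma Pg_eq g t : Pg g t = fold_right (fun u acc => Join (g u) acc)
   (fold_right (fun u acc => Meet (g u) acc) (Pcore g t) (Lm t)) (Lj t).
Proof. destruct t; reflexivity. Qed.

Lemma Pg_lo_le t s : le R t s ->
  fle (fold_right (fun u acc => Meet (lo u) acc) (Pcore lo t) (Lm t)) s -> fle (Pg lo t) s.
Proof.
  intros H1 H2. rewrite Pg_eq. apply (le_fold_join_lub _ nil _ lo); auto.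
  intros u Hu. apply Lj_In in Hu as [Hu Hut]. apply UPLO; auto. eapply le_trans; eauto.
Qed.

Lemma Pg_hi_ge s t : le R s t -> fle s (Pcore hi t) -> fle s (Pg hi t).
Proof.
  intros H1 H2. rewrite Pg_eq. eapply le_trans; [|apply (le_fold_join_c _ nil _ hi)].
  apply (le_fold_meet_glb _ nil _ hi); auto.
  intros u Hu. apply Lm_In in Hu as [Hu Htu]. apply UPHI; auto. eapply le_trans; eauto.
Qed.

Lemma LP t s : D R Ul t s -> fle (Pg lo t) s.
Proof.
  intro HD. pose proof (D_sound HD) as Hs. revert Hs.
  induction HD as [x | a1 a2 b Ha1 IH1 Ha2 IH2 | a b1 b2 Hab IH | a b1 b2 Hab IH
    | a1 a2 b Ha IH | a1 a2 b Ha IH | a b1 b2 Hb1 IH1 Hb2 IH2 | a u b Hu Hau Hub]; intro Hs.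
  - apply Pg_lo_le; auto. apply (le_fold_meet_c _ nil _ lo (Pcore lo (Var x))).
  - apply Pg_lo_le; auto. eapply le_trans. apply (le_fold_meet_c _ nil _ lo). simpl.
    apply le_lub; [apply IH1 | apply IH2]; eapply D_sound; eauto.
  - eapply le_trans. apply IH; exact (D_sound Hab). apply le_join_l.
  - eapply le_trans. apply IH; exact (D_sound Hab). apply le_join_r.
  - apply Pg_lo_le; auto. eapply le_trans. apply (le_fold_meet_c _ nil _ lo). simpl.
    eapply le_trans. apply le_meet_l. apply IH; exact (D_sound Ha).
  - apply Pg_lo_le; auto. eapply le_trans. apply (le_fold_meet_c _ nil _ lo). simpl.
    eapply le_trans. apply le_meet_r. apply IH; exact (D_sound Ha).
  - apply le_glb; [apply IH1 | apply IH2]; eapply D_sound; eauto.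
  - apply Pg_lo_le; auto. eapply le_trans. apply (le_fold_meet_g _ nil _ lo). apply Lm_In; eauto.
    apply UPLO; auto.
Qed.

Lemma UQ s t : D R Ul s t -> fle s (Pg hi t).
Proof.
  intro HD. pose proof (D_sound HD) as Hs. revert Hs.
  induction HD as [x | a1 a2 b Ha1 IH1 Ha2 IH2 | a b1 b2 Hab IH | a b1 b2 Hab IH
    | a1 a2 b Ha IH | a1 a2 b Ha IH | a b1 b2 Hb1 IH1 Hb2 IH2 | a u b Hu Hau Hub]; intro Hs.
  - apply Pg_hi_ge; auto. apply le_refl.
  - apply le_lub; [apply IH1 | apply IH2]; eapply D_sound; eauto.
  - apply Pg_hi_ge; auto. simpl. eapply le_trans. apply IH; exact (D_sound Hab). apply le_join_l.
  - apply Pg_hi_ge; auto. simpl. eapply le_trans. apply IH; exact (D_sound Hab). apply le_join_r.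
  - eapply le_trans. apply le_meet_l. apply IH; exact (D_sound Ha).
  - eapply le_trans. apply le_meet_r. apply IH; exact (D_sound Ha).
  - apply Pg_hi_ge; auto. simpl. apply le_glb; [apply IH1 | apply IH2]; eapply D_sound; eauto.
  - rewrite Pg_eq. eapply le_trans; [| apply (le_fold_join_g _ nil _ hi); apply Lj_In; eauto].
    apply UPHI; auto.
Qed.

Definition S : list (term X * term X) :=
  List.map (fun x => (Var x, Var x)) (enum X) ++
  List.map (fun u => (lo u, hi u)) Ul ++ List.map (fun u => (hi u, lo u)) Ul.

Definition Sig a b := exists a' b', gen_sub S (a', b') /\ feq a a' /\ feq b b'.

Lemma Sig_join a b c d : Sig a b -> Sig c d -> Sig (Join a c) (Join b d).
Proof.
  intros [a' [b' [H1 [H2 Hc3]]]] [c' [d' [H4 [H5 H6]]]].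
  exists (Join a' c'), (Join b' d'). split.
  apply (gs_join H1 H4). split; apply cg_join; assumption.
Qed.
Lemma Sig_meet a b c d : Sig a b -> Sig c d -> Sig (Meet a c) (Meet b d).
Proof.
  intros [a' [b' [H1 [H2 Hc3]]]] [c' [d' [H4 [H5 H6]]]].
  exists (Meet a' c'), (Meet b' d'). split.
  apply (gs_meet H1 H4). split; apply cg_meet; assumption.
Qed.
Lemma Sig_In a b : In (a, b) S -> Sig a b.
Proof. intro H. exists a, b. split. apply gs_base, H. split; apply cg_refl. Qed.
Lemma Sig_diag t : Sig t t.
Proof.
  induction t as [x| |].
  - apply Sig_In. unfold S. apply in_or_app. left.
    change (Var x, Var x) with ((fun x => (Var x, Var x)) x). apply in_map, In_enum.
  - apply Sig_join; auto.
  - apply Sig_meet; auto.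
Qed.
Lemma Sig_feq a b a2 b2 : Sig a b -> feq a a2 -> feq b b2 -> Sig a2 b2.
Proof.
  intros [a' [b' [H1 [H2 Hc3]]]] H4 H5. exists a', b'. split; auto.
  split; eapply cg_trans; eauto; apply cg_sym; auto.
Qed.

Lemma Sig_Pg g1 g2 : (forall u, In u Ul -> Sig (g1 u) (g2 u)) -> forall t, Sig (Pg g1 t) (Pg g2 t).
Proof.
  intros Hg t. induction t; rewrite !Pg_eq;
  (assert (HJ : forall l c c', (forall u, In u l -> In u Ul) -> Sig c c' ->
     Sig (fold_right (fun u acc => Join (g1 u) acc) c l) (fold_right (fun u acc => Join (g2 u) acc) c' l))
   by (induction l; simpl; intros; auto; apply Sig_join; auto));
  (assert (HM : forall l c c', (forall u, In u l -> In u Ul) -> Sig c c' ->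
     Sig (fold_right (fun u acc => Meet (g1 u) acc) c l) (fold_right (fun u acc => Meet (g2 u) acc) c' l))
   by (induction l; simpl; intros; auto; apply Sig_meet; auto));
  apply HJ; try (intros u Hu; apply Lj_In in Hu; tauto);
  apply HM; try (intros u Hu; apply Lm_In in Hu; tauto); simpl.
  - apply Sig_diag.
  - apply Sig_join; auto.
  - apply Sig_meet; auto.
Qed.

Lemma three_to_two : cong_fin_gen R.
Proof.
  exists S. split.
  - intros p Hp. unfold S in Hp. apply in_app_or in Hp as [Hp|Hp].
    + apply in_map_iff in Hp as [x [<- _]]. apply cg_refl.
    + apply in_app_or in Hp as [Hp|Hp]; apply in_map_iff in Hp as [u [<- Hu]];
        destruct (HUl u Hu) as [Hl Hh]; destruct (lo_spec u Hl) as [Hl1 _];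
        destruct (hi_spec u Hh) as [Hh1 _]; simpl.
      * eapply cg_trans. exact Hl1. apply cg_sym, Hh1.
      * eapply cg_trans. exact Hh1. apply cg_sym, Hl1.
  - intros a b Hab.
    assert (SPQ : Sig (Pg lo a) (Pg hi a)).
    { apply Sig_Pg. intros u Hu. apply Sig_In. unfold S. apply in_or_app; right; apply in_or_app; left.
      change (lo u, hi u) with ((fun u => (lo u, hi u)) u). apply in_map, Hu. }
    assert (SQP : Sig (Pg hi a) (Pg lo a)).
    { apply Sig_Pg. intros u Hu. apply Sig_In. unfold S. apply in_or_app; right; apply in_or_app; right.
      change (hi u, lo u) with ((fun u => (hi u, lo u)) u). apply in_map, Hu. }
    set P := Pg lo a. set Q := Pg hi a.
    assert (hPa : fle P a) by (apply LP, D_refl).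
    assert (hPb : fle P b) by (apply LP, D_complete, le_cg; [apply HU | exact Hab]).
    assert (hQa : fle a Q) by (apply UQ, D_refl).
    assert (hQb : fle b Q) by (apply UQ, D_complete, le_cg; [apply HU | apply cg_sym, Hab]).
    assert (HS : Sig (Join (Meet a Q) (Meet b P)) (Join (Meet a P) (Meet b Q))).
    { apply Sig_join; apply Sig_meet; auto using Sig_diag. }
    apply (Sig_feq _ _ a b HS).
    + apply le_antisym.
      * apply le_lub. apply le_meet_l. eapply le_trans. apply le_meet_r. exact hPa.
      * eapply le_trans; [|apply le_join_l]. apply le_glb. apply le_refl. exact hQa.
    + apply le_antisym.
      * apply le_lub. eapply le_trans. apply le_meet_r. exact hPb. apply le_meet_l.
      * eapply le_trans; [|apply le_join_r]. apply le_glb. apply le_refl. exact hQb.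
Qed.

End Three.

Theorem mainTheorem6 (X : finType) (R : list (term X * term X)) :
  (quotient_bounded R <-> cong_fin_gen R) /\
  (cong_fin_gen R <->
    (forall u : term X,
       ((exists x : X, u = Var x) \/
        (exists p, List.In p R /\ (subterm u p.1 \/ subterm u p.2))) ->
       class_has_least R u /\ class_has_greatest R u)).
Proof.
  split; split.
  - intro H. apply three_to_two. intros u _. apply one_to_Q3, H.
  - intro H. apply Q3_to_one, two_to_Q3, H.
  - intros H u _. apply two_to_Q3, H.
  - intro H. apply three_to_two, H.
Qed.
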